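(* Let $R$ be a local ring and $s\in R$ a central element with $s\in J(R)$. Let $A\in M_2(R;s)$ be such that neither $A$ nor $I_2-A$ is a unit of $M_2(R;s)$. Then $A$ is similar to $\left[\begin{smallmatrix} u&1\\ v&w\end{smallmatrix}\right]$ or to $\left[\begin{smallmatrix} w&1\\ v&u\end{smallmatrix}\right]$ for some $u\in 1+J(R)$, $v\in U(R)$, $w\in J(R)$.
   Context: All rings are associative with identity. A ring $R$ is local if $R/J(R)$ is a division ring, where $J(R)$ is the Jacobson radical; $U(R)$ is the group of units. For a ring $R$ and a central element $s\in R$, $M_2(R;s)$ denotes the ring whose elements are the $2\times 2$ arrays $\left[\begin{smallmatrix} a&b\\ c&d\end{smallmatrix}\right]$ with $a,b,c,d\in R$, with componentwise addition and multiplication $\left[\begin{smallmatrix} a&b\\ c&d\end{smallmatrix}\right]\left[\begin{smallmatrix} a'&b'\\ c'&d'\end{smallmatrix}\right]=\left[\begin{smallmatrix} aa'+s^2bc'&ab'+bd'\\ ca'+dc'&s^2cb'+dd'\end{smallmatrix}\right]$, with identity $I_2$. Two elements $A,B\in M_2(R;s)$ are similar if $B=P^{-1}AP$ for some unit $P$ of $M_2(R;s)$. *)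

(* Defs.v *)
From HB Require Import structures.
From mathcomp Require Import all_boot all_order all_algebra.
Set Implicit Arguments. Unset Strict Implicit. Unset Printing Implicit Defensive.
Import GRing.Theory.
Local Open Scope ring_scope.

Section Defs.
Variable R : pzRingType.

Definition is_unit (x : R) : Prop := exists y : R, x * y = 1 /\ y * x = 1.

(* Jacobson radical, element-wise definition (Lam, FC, Lemma 4.1):
   y \in J(R) iff 1 - x y is left-invertible for every x. *)
Definition jac (y : R) : Prop := forall x : R, exists z : R, z * (1 - x * y) = 1.

(* R is local : R/J(R) is a division ring, written out on representatives:
   the quotient is nonzero (1 \notin J) and every class outside J(R) is
   invertible modulo J(R). *)
Definition local_ring : Prop :=
  ~ jac 1 /\
  forall x : R, ~ jac x -> exists y : R, jac (x * y - 1) /\ jac (y * x - 1).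

Definition central (s : R) : Prop := forall x : R, s * x = x * s.

Record mat2 := M2 { m11 : R; m12 : R; m21 : R; m22 : R }.

Definition mat2_mul (s : R) (A B : mat2) : mat2 :=
  M2 (m11 A * m11 B + s ^+ 2 * m12 A * m21 B)
     (m11 A * m12 B + m12 A * m22 B)
     (m21 A * m11 B + m22 A * m21 B)
     (s ^+ 2 * m21 A * m12 B + m22 A * m22 B).

Definition mat2_one : mat2 := M2 1 0 0 1.

Definition mat2_sub (A B : mat2) : mat2 :=
  M2 (m11 A - m11 B) (m12 A - m12 B) (m21 A - m21 B) (m22 A - m22 B).

Definition mat2_unit (s : R) (A : mat2) : Prop :=
  exists B : mat2, mat2_mul s A B = mat2_one /\ mat2_mul s B A = mat2_one.

Definition mat2_similar (s : R) (A B : mat2) : Prop :=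
  exists P Q : mat2, mat2_mul s P Q = mat2_one /\ mat2_mul s Q P = mat2_one /\
    B = mat2_mul s (mat2_mul s Q A) P.

End Defs.

(* Main.v *)
Require Import Defs.
From mathcomp Require Import all_boot all_order all_algebra.
From Stdlib Require Import Classical.
Local Open Scope ring_scope.
Import GRing.Theory.

Section RingFacts.
Context {R : pzRingType}.
Implicit Types a b x y z : R.

Lemma jac0 : jac (0:R).
Proof. by move=> x; exists 1; rewrite mulr0 subr0 mul1r. Qed.

Lemma jac_mull {y} x : jac y -> jac (x*y).
Proof. by move=> h z; have [w hw] := h (z*x); exists w; rewrite mulrA. Qed.

Lemma jac_opp {y} : jac y -> jac (-y).
Proof. by move=> h z; have [w hw] := h (-z); exists w; rewrite mulrN -mulNr. Qed.

Lemma jac_unit {y} : jac y -> is_unit (1 - y).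
Proof.
move=> h; have [z hz] := h 1; rewrite mul1r in hz.
have ez : 1 - (-z)*y = z.
  rewrite mulNr opprK. rewrite mulrBr mulr1 in hz. by rewrite -hz subrK.
have [w hw] := h (-z); rewrite ez in hw.
have ew : w = 1 - y by rewrite -[w]mulr1 -{1}hz mulrA hw mul1r.
exists z; split; first by rewrite -ew.
exact: hz.
Qed.

Lemma is_unit_mul {a b} : is_unit a -> is_unit b -> is_unit (a*b).
Proof.
move=> [a' [ha1 ha2]] [b' [hb1 hb2]]; exists (b' * a'); split.
  by rewrite mulrA -(mulrA a) hb1 mulr1 ha1.
by rewrite mulrA -(mulrA b') ha2 mulr1 hb2.
Qed.

Lemma jac_mulr {y} x : jac y -> jac (y*x).
Proof.
move=> h z.
have [T [hT1 hT2]] := jac_unit (jac_mull (x*z) h).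
exists (1 + z*y*T*x); rewrite mulrDl mul1r.
have e : z*y*T*x*(1 - z*(y*x)) = z*y*(T*(1 - x*z*y))*x.
  by rewrite !mulrBr !mulrBl !mulr1 !mulrA.
by rewrite e hT2 mulr1 mulrA subrK.
Qed.

Lemma jac_add {y1 y2} : jac y1 -> jac y2 -> jac (y1+y2).
Proof.
move=> h1 h2 x.
have [U [e1 e2]] := jac_unit (jac_mull x h1).
have [w hw] := h2 (U*x).
exists (w*U).
have e : 1 - x*(y1+y2) = (1 - x*y1)*(1 - U*x*y2).
  by rewrite mulrBr mulr1 !mulrA e1 mul1r mulrDr opprD addrA.
by rewrite e -mulrA (mulrA U) e2 mul1r.
Qed.

Lemma jac_sub {y1 y2} : jac y1 -> jac y2 -> jac (y1 - y2).
Proof. by move=> h1 h2; apply: jac_add h1 (jac_opp h2). Qed.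

Lemma local_unit x : local_ring R -> ~ jac x -> is_unit x.
Proof.
move=> [_ h2] nx; have [y [j1 j2]] := h2 x nx.
have u1 := jac_unit (jac_opp j1); rewrite opprB subKr in u1.
have u2 := jac_unit (jac_opp j2); rewrite opprB subKr in u2.
move: u1 u2 => [r [hr1 _]] [l [_ hl2]].
have e : l * y = y * r.
  by rewrite -[l*y]mulr1 -hr1 !mulrA -(mulrA l) hl2 mul1r.
exists (y*r); split; first by rewrite mulrA.
by rewrite -e -mulrA.
Qed.

Lemma unit_notjac x : ~ jac (1:R) -> is_unit x -> ~ jac x.
Proof. by move=> n1 [y [h1 h2]] hx; apply: n1; rewrite -h2; apply: jac_mull. Qed.

Definition eqJ x y := jac (x - y).

Lemma eqJ_refl x : eqJ x x.
Proof. by rewrite /eqJ subrr; apply: jac0. Qed.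

Lemma eqJ_sym {x y} : eqJ x y -> eqJ y x.
Proof. by rewrite /eqJ => h; rewrite -opprB; apply: jac_opp. Qed.

Lemma eqJ_trans {x y z} : eqJ x y -> eqJ y z -> eqJ x z.
Proof. by rewrite /eqJ => h1 h2; rewrite -(subrKA y); apply: jac_add. Qed.

Lemma eqJ_add {x x' y y'} : eqJ x x' -> eqJ y y' -> eqJ (x + y) (x' + y').
Proof.
rewrite /eqJ => h1 h2; have -> : x + y - (x' + y') = (x - x') + (y - y').
  by rewrite opprD addrACA.
by apply: jac_add.
Qed.

Lemma eqJ_opp {x x'} : eqJ x x' -> eqJ (- x) (- x').
Proof. by rewrite /eqJ => h; rewrite -opprD; apply: jac_opp. Qed.

Lemma eqJ_sub {x x' y y'} : eqJ x x' -> eqJ y y' -> eqJ (x - y) (x' - y').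
Proof. by move=> h1 h2; apply: eqJ_add h1 (eqJ_opp h2). Qed.

Lemma eqJ_mull z {x y} : eqJ x y -> eqJ (z * x) (z * y).
Proof. by rewrite /eqJ -mulrBr; apply: jac_mull. Qed.

Lemma eqJ_mulr z {x y} : eqJ x y -> eqJ (x * z) (y * z).
Proof. by rewrite /eqJ -mulrBl; apply: jac_mulr. Qed.

Lemma eqJ_mul {x x' y y'} : eqJ x x' -> eqJ y y' -> eqJ (x * y) (x' * y').
Proof. by move=> h1 h2; apply: (eqJ_trans (eqJ_mulr y h1)); apply: eqJ_mull. Qed.

Lemma eqJ0 {x} : jac x -> eqJ x 0.
Proof. by rewrite /eqJ subr0. Qed.

Lemma unit_eqJ {x y} : is_unit x -> eqJ y x -> is_unit y.
Proof.
move=> hx h; have hx' := hx; move: hx' => [xi [h1 h2]].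
have := is_unit_mul hx (jac_unit (jac_mull xi (jac_opp h))).
by rewrite mulrBr mulr1 mulrA h1 mul1r opprB subKr.
Qed.

End RingFacts.

Section Mat.
Context {R : pzRingType}.
Context {s : R}.
Hypothesis ht : forall x : R, s^+2 * x = x * s^+2.

Lemma ht' x : x * s^+2 = s^+2 * x. Proof. by rewrite ht. Qed.

Lemma mat2_mulA (A B C : mat2 R) :
  mat2_mul s (mat2_mul s A B) C = mat2_mul s A (mat2_mul s B C).
Proof.
case: A B C => [a b c d] [a' b' c' d'] [a'' b'' c'' d''].
rewrite /mat2_mul /=; move: (s^+2) ht => t htt.
have htt' : forall x, x * t = t * x by move=> x; rewrite htt.
congr M2; rewrite !(mulrDl, mulrDr) !mulrA ?htt' -!addrA.
all: by congr (_ + _); apply: addrCA.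
Qed.


Lemma mat2_mul1l (A : mat2 R) : mat2_mul s (mat2_one R) A = A.
Proof. by case: A => a b c d; rewrite /mat2_mul /= !mul1r !mul0r !mulr0 !mul0r !addr0 !add0r. Qed.

Lemma mat2_mul1r (A : mat2 R) : mat2_mul s A (mat2_one R) = A.
Proof. by case: A => a b c d; rewrite /mat2_mul /= !mulr1 !mulr0 !addr0 !add0r. Qed.

Lemma sim_refl (A : mat2 R) : mat2_similar s A A.
Proof.
exists (mat2_one R), (mat2_one R); rewrite !mat2_mul1l; split => //; split => //.
by rewrite mat2_mul1r.
Qed.

Lemma sim_trans (A B C : mat2 R) :
  mat2_similar s A B -> mat2_similar s B C -> mat2_similar s A C.
Proof.
move=> [P1 [Q1 [h1 [h1' ->]]]] [P2 [Q2 [h2 [h2' ->]]]].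
exists (mat2_mul s P1 P2), (mat2_mul s Q2 Q1); split; last split.
- by rewrite mat2_mulA -(mat2_mulA P2) h2 mat2_mul1l h1.
- by rewrite mat2_mulA -(mat2_mulA Q1) h1' mat2_mul1l h2'.
- by rewrite !mat2_mulA.
Qed.

Lemma mat2_unit_mul (A B : mat2 R) :
  mat2_unit s A -> mat2_unit s B -> mat2_unit s (mat2_mul s A B).
Proof.
move=> [A' [h1 h2]] [B' [h3 h4]]; exists (mat2_mul s B' A'); split.
  by rewrite mat2_mulA -(mat2_mulA B) h3 mat2_mul1l h1.
by rewrite mat2_mulA -(mat2_mulA A') h2 mat2_mul1l h4.
Qed.

Lemma jac_t : jac s -> jac (s^+2).
Proof. by move=> h; rewrite expr2; apply: jac_mull. Qed.

Lemma mat2_unit_diag (a b c d : R) : jac s ->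
  is_unit a -> is_unit d -> mat2_unit s (M2 a b c d).
Proof.
move=> js [ai [ha1 ha2]] hd.
pose f := d - s^+2 * c * ai * b.
have hf : is_unit f.
  apply: (unit_eqJ hd); rewrite -[X in eqJ _ X]subr0.
  apply: eqJ_sub; first exact: eqJ_refl.
  by apply: eqJ0; do 3 apply: jac_mulr; apply: jac_t.
move: hf => [fi [hf1 hf2]].
have -> : M2 a b c d = mat2_mul s (M2 a 0 c 1) (M2 1 (ai * b) 0 f).
  rewrite /mat2_mul /= /f !mulr1 !mulr0 !mul0r !mul1r !addr0 mulrA ha1 mul1r.
  by rewrite !mulrA addrC subrK.
apply: mat2_unit_mul.
  exists (M2 ai 0 (-(c*ai)) 1); rewrite /mat2_mul /= /mat2_one.
  rewrite !mulr1 !mulr0 !mul0r !mul1r !addr0 !add0r ha1 ha2.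
  by split; rewrite ?subrr // mulNr -mulrA ha2 mulr1 addNr.
exists (M2 1 (-(ai * b * fi)) 0 fi); rewrite /mat2_mul /= /mat2_one.
rewrite !mulr1 !mulr0 !mul0r !mul1r !addr0 !add0r hf1 hf2.
by split; rewrite ?addNr // mulNr -mulrA hf2 mulr1 subrr.
Qed.

End Mat.

Section Steps.
Context {R : pzRingType}.
Context {s : R}.
Hypothesis ht : forall x : R, s^+2 * x = x * s^+2.
Hypothesis js : jac s.
Hypothesis hl : local_ring R.
Variables al de : R.
Hypothesis hde : forall x, de * x = x * de.
Hypothesis hu : is_unit (al - de).

Ltac simpm := rewrite /mat2_mul /mat2_one /= ?mulr1 ?mulr0 ?mul0r ?mul1r ?addr0 ?add0r ?mulr0 ?mul0r ?addr0 ?add0r.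

Definition good (A : mat2 R) := eqJ (m11 A) al /\ eqJ (m22 A) de.

Lemma eqJ_addj {x y z : R} : eqJ x y -> jac z -> eqJ (x + z) y.
Proof. by move=> h hz; rewrite -[y]addr0; apply: eqJ_add h (eqJ0 hz). Qed.

Lemma unit_opp {x : R} : is_unit x -> is_unit (- x).
Proof. by move=> [y [h1 h2]]; exists (- y); rewrite !mulrNN. Qed.

Lemma jt (x : R) : jac (s^+2 * x).
Proof. exact: jac_mulr x (jac_t js). Qed.

Lemma step1 A : good A -> exists A1, mat2_similar s A A1 /\ good A1 /\ is_unit (m21 A1).
Proof.
case: A => a b c d [ga gd] /=.
case: (classic (jac c)) => hc; last first.
  exists (M2 a b c d); split; first exact: sim_refl.
  by split; [split | apply: local_unit].
exists (mat2_mul s (mat2_mul s (M2 1 0 (-1) 1) (M2 a b c d)) (M2 1 0 1 1)).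
split.
  exists (M2 1 0 1 1), (M2 1 0 (-1) 1); split; last split => //.
    by simpm; rewrite ?subrr ?addNr.
  by simpm; rewrite ?subrr ?addNr.
rewrite /good; simpm; rewrite ?mulN1r ?mulrN1 ?mulNr ?mulrN.
split; first split.
- exact: eqJ_addj ga (jt b).
- by rewrite addrC; apply: eqJ_addj gd (jac_opp (jt b)).
apply: (unit_eqJ (unit_opp hu)).
have -> : - (al - de) = -al + 0 + (0 + de) by rewrite addr0 add0r opprB addrC.
apply: eqJ_add; apply: eqJ_add.
- exact: eqJ_opp ga.
- exact: eqJ0 hc.
- exact: eqJ0 (jac_opp (jt b)).
- exact: gd.
Qed.

Lemma step2 A : good A -> is_unit (m21 A) ->
  exists A1, mat2_similar s A A1 /\ good A1 /\ is_unit (m21 A1) /\ is_unit (m12 A1).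
Proof.
case: A => a b c d [ga gd] /= uc.
case: (classic (jac b)) => hb; last first.
  exists (M2 a b c d); split; first exact: sim_refl.
  by split; [split | split => //; apply: local_unit].
exists (mat2_mul s (mat2_mul s (M2 1 (-1) 0 1) (M2 a b c d)) (M2 1 1 0 1)).
split.
  exists (M2 1 1 0 1), (M2 1 (-1) 0 1); split; last split => //.
    by simpm; rewrite ?subrr ?addNr.
  by simpm; rewrite ?subrr ?addNr.
rewrite /good; simpm; rewrite ?mulN1r ?mulrN1 ?mulNr ?mulrN.
split; first split.
- exact: eqJ_addj ga (jac_opp (jt c)).
- by rewrite addrC; apply: eqJ_addj gd (jt c).
split => //.
apply: (unit_eqJ hu).
have -> : al - de = al - 0 + (0 - de) by rewrite subr0 add0r.
apply: eqJ_add; apply: eqJ_sub.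
- exact: ga.
- exact: eqJ0 (jt c).
- exact: eqJ0 hb.
- exact: gd.
Qed.

Lemma step3 A : good A -> is_unit (m21 A) -> is_unit (m12 A) ->
  exists B, mat2_similar s A B /\ good B /\ m12 B = 1 /\ is_unit (m21 B).
Proof.
case: A => a b c d [ga gd] /= uc [y [hb1 hb2]].
exists (mat2_mul s (mat2_mul s (M2 1 0 0 b) (M2 a b c d)) (M2 1 0 0 y)).
split.
  exists (M2 1 0 0 y), (M2 1 0 0 b); split; last split => //.
    by simpm; rewrite hb2.
  by simpm; rewrite hb1.
rewrite /good; simpm.
split; first split => //.
- have -> : de = b * de * y by rewrite -hde -mulrA hb1 mulr1.
  by apply: eqJ_mul; [apply: eqJ_mul; [apply: eqJ_refl | exact: gd] | apply: eqJ_refl].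
split => //; apply: is_unit_mul => //; by exists y.
Qed.

Lemma reduce A : good A ->
  exists B, mat2_similar s A B /\ good B /\ m12 B = 1 /\ is_unit (m21 B).
Proof.
move=> gA.
have [A1 [s1 [g1 u1]]] := step1 _ gA.
have [A2 [s2 [g2 [u2 u2']]]] := step2 _ g1 u1.
have [B [s3 [g3 [h3 u3]]]] := step3 _ g2 u2 u2'.
exists B; split => //.
exact: (sim_trans ht _ _ _ (sim_trans ht _ _ _ s1 s2) s3).
Qed.
End Steps.

Theorem lemma2p15 (R : pzRingType) (s : R) (A : mat2 R) :
  local_ring R -> central s -> jac s ->
  ~ mat2_unit s A -> ~ mat2_unit s (mat2_sub (mat2_one R) A) ->
  exists u v w : R,
    jac (u - 1) /\ is_unit v /\ jac w /\
    (mat2_similar s A (M2 u 1 v w) \/ mat2_similar s A (M2 w 1 v u)).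
Proof.
move=> hl hc js nA nIA.
have ht : forall x : R, s^+2 * x = x * s^+2.
  by move=> x; rewrite expr2 -mulrA hc mulrA hc -mulrA.
have n1 := hl.1.
have h1 : jac (m11 A) \/ jac (m22 A).
  case: (classic (jac (m11 A))) => ha; first by left.
  case: (classic (jac (m22 A))) => hd; first by right.
  case: nA; case: A ha hd {nIA} => a b c d /= ha hd.
  by apply: mat2_unit_diag => //; apply: local_unit.
have h2 : jac (1 - m11 A) \/ jac (1 - m22 A).
  case: (classic (jac (1 - m11 A))) => ha; first by left.
  case: (classic (jac (1 - m22 A))) => hd; first by right.
  case: nIA; rewrite /mat2_sub /=.
  by apply: mat2_unit_diag => //; apply: local_unit.
have one_u : is_unit (1 : R) by exists 1; rewrite mulr1.
case: A h1 h2 {nA nIA} => a b c d /= [ha|hd] [ha'|hd'].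
- by case: n1; rewrite -(subrK a 1) addrC; apply: jac_add.
- have hde : forall x : R, 1 * x = x * 1 by move=> x; rewrite mul1r mulr1.
  have hu : is_unit ((0:R) - 1) by rewrite sub0r; apply: unit_opp.
  have gA : good 0 1 (M2 a b c d).
    by split; [apply: eqJ0 | rewrite /eqJ -opprB; apply: jac_opp].
  have [[u' o' v' w'] [sB [[gu gw] [/= ho uv]]]] := reduce ht js hl _ _ hde hu _ gA.
  subst o'.
  exists w', v', u'; split => //; split => //; split; last by right.
  by move: gu; rewrite /eqJ subr0.
- have hde : forall x : R, 0 * x = x * 0 by move=> x; rewrite mul0r mulr0.
  have hu : is_unit ((1:R) - 0) by rewrite subr0.
  have gA : good 1 0 (M2 a b c d).
    by split; [rewrite /eqJ -opprB; apply: jac_opp | apply: eqJ0].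
  have [[u' o' v' w'] [sB [[gu gw] [/= ho uv]]]] := reduce ht js hl _ _ hde hu _ gA.
  subst o'.
  exists u', v', w'; split => //; split => //; split; last by left.
  by move: gw; rewrite /eqJ subr0.
- by case: n1; rewrite -(subrK d 1) addrC; apply: jac_add.
Qed.
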